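(* Let $G$ be a graph on $[n]$ and $p$ in the Shearer region $\mathcal S$ of $G$. Then for all $A,B\subseteq[n]$, $q_A(p)\,q_B(p)\ge q_{A\cup B}(p)\,q_{A\cap B}(p)$.
   Context: Shearer notation: $\mathrm{Ind}$ is the family of independent sets of $G$ (including $\emptyset$); for $p\in\mathbb R^n$ and $I\subseteq[n]$, $p^I=\prod_{i\in I}p_i$. For $S\subseteq[n]$, $q_S(p)=\sum_{I\in\mathrm{Ind},\,S\subseteq I}(-1)^{|I\setminus S|}p^I$ (so $q_S=0$ if $S\notin\mathrm{Ind}$) and $\breve q_S(p)=\sum_{I\in\mathrm{Ind},\,I\subseteq S}(-1)^{|I|}p^I$. The Shearer region is $\mathcal S=\{p\in(0,1)^n:\breve q_S(p)>0\ \forall S\subseteq[n]\}$, which equals $\{p\in(0,1)^n: q_I(p)>0\ \forall I\in\mathrm{Ind}\}$. *)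

(* Defs.v *)
From HB Require Import structures.
From mathcomp Require Import all_boot all_order all_algebra.
Set Implicit Arguments. Unset Strict Implicit. Unset Printing Implicit Defensive.
Import Order.TTheory GRing.Theory Num.Theory.
Local Open Scope ring_scope.

Definition simple_graph (n : nat) (e : rel 'I_n) : Prop :=
  symmetric e /\ irreflexive e.

Definition indep (n : nat) (e : rel 'I_n) (I : {set 'I_n}) : bool :=
  [forall x in I, forall y in I, ~~ e x y].

Definition pmon (R : ringType) (n : nat) (p : 'I_n -> R) (I : {set 'I_n}) : R :=
  \prod_(i in I) p i.

Definition qS (R : ringType) (n : nat) (e : rel 'I_n) (p : 'I_n -> R)
    (S : {set 'I_n}) : R :=
  \sum_(I : {set 'I_n} | indep e I && (S \subset I))
     (-1) ^+ #|I :\: S| * pmon p I.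

Definition qbreve (R : ringType) (n : nat) (e : rel 'I_n) (p : 'I_n -> R)
    (S : {set 'I_n}) : R :=
  \sum_(I : {set 'I_n} | indep e I && (I \subset S))
     (-1) ^+ #|I| * pmon p I.

Definition shearer (R : realFieldType) (n : nat) (e : rel 'I_n) (p : 'I_n -> R)
  : Prop :=
  (forall i, 0 < p i < 1) /\ (forall S : {set 'I_n}, 0 < qbreve e p S).

(* Main.v *)
Require Import Defs.
From HB Require Import structures.
From mathcomp Require Import all_boot all_order all_algebra.
From mathcomp Require Import ring lra.
Import Order.TTheory GRing.Theory Num.Theory.
Local Open Scope ring_scope.

Lemma indepP {n : nat} (e : rel 'I_n) (I : {set 'I_n}) :
  reflect (forall x y, x \in I -> y \in I -> ~~ e x y) (indep e I).
Proof.
apply: (iffP forallP) => [H x y xI yI | H x].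
  by move/implyP: (H x) => /(_ xI)/forallP/(_ y)/implyP/(_ yI).
apply/implyP=> xI; apply/forallP=> y; apply/implyP=> yI; exact: H.
Qed.

Lemma indep_sub {n : nat} {e : rel 'I_n} {I J : {set 'I_n}} :
  I \subset J -> indep e J -> indep e I.
Proof.
move=> sIJ /indepP H; apply/indepP=> x y xI yI; apply: H; exact: (subsetP sIJ).
Qed.

Definition nb {n : nat} (e : rel 'I_n) (v : 'I_n) : {set 'I_n} := [set w | e v w].

Lemma qb_rec (R : realFieldType) (n : nat) (e : rel 'I_n) (p : 'I_n -> R)
  (v : 'I_n) (S : {set 'I_n}) :
  simple_graph e -> v \notin S ->
  qbreve e p (v |: S) = qbreve e p S - p v * qbreve e p (S :\: nb e v).
Proof.
move=> [sym irr] vS.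
rewrite /qbreve (bigID (fun I : {set 'I_n} => v \in I)) /= addrC; congr (_ + _).
  apply: eq_bigl => I; rewrite -andbA; congr (_ && _).
  apply/idP/idP.
    move=> /andP[sub vI]; apply/subsetP=> x xI.
    have := subsetP sub x xI; rewrite in_setU1; case/orP=> // /eqP xv.
    by rewrite -xv xI in vI.
  move=> sub; rewrite (subset_trans sub (subsetU1 _ _)) /=.
  by apply/negP=> vI; rewrite (subsetP sub v vI) in vS.
rewrite mulr_sumr -sumrN.
rewrite (reindex_onto (fun J => v |: J) (fun I => I :\ v)) /=; last first.
  by move=> I /andP[_ vI]; rewrite setD1K.
apply: eq_big => [J | J /andP[_ HJ]].
  apply/idP/idP.
    move=> /andP[/andP[/andP[iJ sub] _] eqJ].
    have vJ : v \notin J by rewrite -(eqP eqJ) !inE eqxx.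
    apply/andP; split; first exact: (indep_sub (subsetU1 _ _) iJ).
    apply/subsetP=> x xJ; rewrite !inE.
    have := subsetP sub x; rewrite !in_setU1 xJ orbT => /(_ isT) /orP[/eqP xv|xS].
      by rewrite -xv xJ in vJ.
    rewrite xS andbT; move/indepP: iJ; apply; by rewrite !in_setU1 ?eqxx ?xJ ?orbT.
  move=> /andP[iJ sub].
  have vJ : v \notin J by apply/negP=> /(subsetP sub); rewrite !inE (negbTE vS) andbF.
  rewrite setU1K // eqxx setU11 andbT setUS ?andbT; last by apply: (subset_trans sub); apply: subsetDl.
  apply/indepP=> x y; rewrite !in_setU1 => /orP[/eqP->|xJ] /orP[/eqP->|yJ].
  - by rewrite irr.
  - by have := subsetP sub y yJ; rewrite !inE => /andP[].
  - rewrite sym; by have := subsetP sub x xJ; rewrite !inE => /andP[].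
  - by move/indepP: iJ; apply.
have vJ : v \notin J by rewrite -(eqP HJ) !inE eqxx.
rewrite cardsU1 vJ add1n exprS /pmon big_setU1 //=.
ring.
Qed.

Lemma qb_mono1 {R : realFieldType} {n : nat} {e : rel 'I_n} {p : 'I_n -> R}
  {v : 'I_n} {S : {set 'I_n}} :
  simple_graph e -> shearer e p -> v \notin S ->
  qbreve e p (v |: S) <= qbreve e p S.
Proof.
move=> sg [hp hq] vS; rewrite qb_rec // gerBl.
by apply: mulr_ge0; [case/andP: (hp v) => /ltW | apply: ltW].
Qed.

Lemma qb_mono {R : realFieldType} {n : nat} {e : rel 'I_n} {p : 'I_n -> R}
  {X Y : {set 'I_n}} :
  simple_graph e -> shearer e p -> X \subset Y ->
  qbreve e p Y <= qbreve e p X.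
Proof.
move=> sg sh; have [k] := ubnP #|Y :\: X|.
elim: k Y => [|k IH] Y // ltk sXY.
case: (set_0Vmem (Y :\: X)) => [/eqP|[w wYX]].
  rewrite setD_eq0 => sYX; have -> : Y = X by apply/eqP; rewrite eqEsubset sYX.
  exact: lexx.
move: (wYX); rewrite inE => /andP[wX wY].
rewrite -(setD1K wY).
apply: le_trans (qb_mono1 sg sh _) _; first by rewrite !inE eqxx.
apply: IH.
  have -> : (Y :\ w) :\: X = (Y :\: X) :\ w.
    by apply/setP=> x; rewrite !inE andbCA.
  by apply: leq_trans (proper_card (properD1 wYX)) _; rewrite -ltnS.
apply/subsetP=> x xX; rewrite !inE (subsetP sXY x xX) andbT.
by apply/eqP=> xw; rewrite -xw xX in wX.
Qed.

Lemma keyP {R : realFieldType} {n : nat} {e : rel 'I_n} {p : 'I_n -> R} :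
  simple_graph e -> shearer e p ->
  forall (T S : {set 'I_n}) (v : 'I_n), S \subset T -> v \notin T ->
  qbreve e p (v |: T) * qbreve e p S <= qbreve e p (v |: S) * qbreve e p T.
Proof.
move=> sg sh; case: (sh) => hp hq.
move=> T; have [k] := ubnP #|T|; elim: k T => [|k IH] T // ltT S v sST vT.
have vS : v \notin S by apply/negP=> /(subsetP sST); rewrite (negbTE vT).
have Q : forall (W S' : {set 'I_n}), S' \subset T ->
    qbreve e p (S' :\: W) * qbreve e p T <= qbreve e p (T :\: W) * qbreve e p S'.
  move=> W; have [m] := ubnP #|W :&: T|; elim: m W => [|m IHm] W // ltWm S' sST'.
  case: (set_0Vmem (W :&: T)) => [WT0|[w wWT]].
    have dT : [disjoint T & W] by rewrite -setI_eq0 setIC WT0.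
    have dS : [disjoint S' & W] by apply: disjointWl sST' dT.
    by rewrite (setDidPl dT) (setDidPl dS) mulrC.
  move: (wWT); rewrite inE => /andP[wW wT].
  have ltW' : (#|(W :\ w) :&: T| < m)%N.
    have -> : (W :\ w) :&: T = (W :&: T) :\ w by apply/setP=> x; rewrite !inE andbA.
    by apply: leq_trans (proper_card (properD1 wWT)) _; rewrite -ltnS.
  have wTW : w \notin T :\: W by rewrite inE wW.
  have eT : T :\: (W :\ w) = w |: (T :\: W).
    by apply/setP=> x; rewrite !inE; have [->|xw] := eqVneq x w; rewrite /= ?wT.
  case: (boolP (w \in S')) => wS.
    have eS : S' :\: (W :\ w) = w |: (S' :\: W).
      by apply/setP=> x; rewrite !inE; have [->|xw] := eqVneq x w; rewrite /= ?wS.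
    have H1 := IHm _ ltW' S' sST'; rewrite eS eT in H1.
    have ltTW : (#|T :\: W| < k)%N.
      have pr : T :\: W \proper T.
        apply: sub_proper_trans (properD1 wT).
        apply/subsetP=> x; rewrite !inE => /andP[xW ->]; rewrite andbT.
        by apply/eqP=> xw; rewrite xw wW in xW.
      by apply: leq_trans (proper_card pr) _; rewrite -ltnS.
    have H2 := IH (T :\: W) ltTW (S' :\: W) w (setSD W sST') wTW.
    rewrite -(ler_pM2l (hq (w |: (S' :\: W)))).
    have A := ler_wpM2l (ltW (hq (S' :\: W))) H1.
    have B := ler_wpM2r (ltW (hq S')) H2.
    lra.
  have eS : S' :\: (W :\ w) = S' :\: W.
    by apply/setP=> x; rewrite !inE; have [->|xw] := eqVneq x w; rewrite /= ?(negbTE wS) ?andbF.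
  have H1 := IHm _ ltW' S' sST'; rewrite eS eT in H1.
  exact: (le_trans H1 (ler_wpM2r (ltW (hq S')) (qb_mono1 sg sh wTW))).
rewrite !qb_rec //.
have H := Q (nb e v) S sST.
have pv : 0 <= p v by case/andP: (hp v) => /ltW.
have := ler_wpM2l pv H.
lra.
Qed.

Lemma logsub {R : realFieldType} {n : nat} {e : rel 'I_n} {p : 'I_n -> R} :
  simple_graph e -> shearer e p ->
  forall (W S T : {set 'I_n}), S \subset T -> [disjoint W & T] ->
  qbreve e p (T :|: W) * qbreve e p S <= qbreve e p (S :|: W) * qbreve e p T.
Proof.
move=> sg sh; case: (sh) => hp hq.
move=> W S T sST; have [k] := ubnP #|W|; elim: k W => [|k IH] W // ltk dWT.
case: (set_0Vmem W) => [->|[w wW]].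
  by rewrite !setU0 mulrC.
have wT : w \notin T by rewrite (disjointFr dWT wW).
have ltk' : (#|W :\ w| < k)%N.
  by apply: leq_trans (proper_card (properD1 wW)) _; rewrite -ltnS.
have H1 := IH _ ltk' (disjointWl (subD1set W w) dWT).
have eT : T :|: W = w |: (T :|: (W :\ w)).
  by apply/setP=> x; rewrite !inE; have [->|xw] := eqVneq x w; rewrite /= ?wW ?orbT.
have eS : S :|: W = w |: (S :|: (W :\ w)).
  by apply/setP=> x; rewrite !inE; have [->|xw] := eqVneq x w; rewrite /= ?wW ?orbT.
have wTW : w \notin T :|: (W :\ w) by rewrite !inE eqxx (negbTE wT).
have K := keyP sg sh _ _ _ (setSU (W :\ w) sST) wTW.
rewrite eT eS -(ler_pM2l (hq (S :|: (W :\ w)))).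
have A := ler_wpM2r (ltW (hq S)) K.
have B := ler_wpM2l (ltW (hq (w |: (S :|: (W :\ w))))) H1.
lra.
Qed.

Lemma logsub2 {R : realFieldType} {n : nat} {e : rel 'I_n} {p : 'I_n -> R} :
  simple_graph e -> shearer e p -> forall X Y : {set 'I_n},
  qbreve e p (X :|: Y) * qbreve e p (X :&: Y) <= qbreve e p X * qbreve e p Y.
Proof.
move=> sg sh X Y.
have d : [disjoint Y :\: X & X].
  rewrite -setI_eq0; apply/eqP/setP=> x; rewrite !inE; by case: (x \in X); rewrite ?andbF.
have := logsub sg sh _ _ _ (subsetIl X Y) d.
have -> : X :|: (Y :\: X) = X :|: Y.
  by apply/setP=> x; rewrite !inE; case: (x \in X).
have -> : (X :&: Y) :|: (Y :\: X) = Y.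
  by apply/setP=> x; rewrite !inE; case: (x \in X); case: (x \in Y).
by move=> H; rewrite [_ * qbreve e p Y]mulrC.
Qed.

Definition tS {n : nat} (e : rel 'I_n) (S : {set 'I_n}) : {set 'I_n} :=
  [set w | (w \notin S) && [forall s in S, ~~ e s w]].

Lemma qS_indep {R : realFieldType} {n : nat} {e : rel 'I_n} (p : 'I_n -> R)
  {S : {set 'I_n}} :
  simple_graph e -> indep e S -> qS e p S = pmon p S * qbreve e p (tS e S).
Proof.
move=> [sym irr] iS; rewrite /qS /qbreve mulr_sumr.
rewrite (reindex_onto (fun J : {set 'I_n} => S :|: J) (fun I => I :\: S)) /=; last first.
  move=> I /andP[_ sSI]; apply/setP=> x; rewrite !inE.
  by case xS: (x \in S) => //=; rewrite (subsetP sSI x xS).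
apply: eq_big => [J | J /andP[/andP[_ _] HJ]].
  apply/idP/idP.
  - move=> /andP[/andP[iU _] eqJ].
    have dJ : forall x, x \in J -> x \notin S.
      by move=> x xJ; move: xJ; rewrite -(eqP eqJ) !inE => /andP[].
    apply/andP; split; first exact: indep_sub (subsetUr S J) iU.
    apply/subsetP=> x xJ; rewrite inE dJ //=; apply/forallP=> s; apply/implyP=> sS.
    by move/indepP: iU; apply; rewrite !inE ?sS ?xJ ?orbT.
  - move=> /andP[iJ sub].
    have hJ : forall x, x \in J -> (x \notin S) && [forall s in S, ~~ e s x].
      by move=> x /(subsetP sub); rewrite inE.
    apply/andP; split; first (apply/andP; split; last exact: subsetUl).
      apply/indepP=> x y; rewrite !inE => /orP[xS|xJ] /orP[yS|yJ].
      + by move/indepP: iS; apply.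
      + by case/andP: (hJ y yJ) => _ /forallP/(_ x)/implyP/(_ xS).
      + by rewrite sym; case/andP: (hJ x xJ) => _ /forallP/(_ y)/implyP/(_ yS).
      + by move/indepP: iJ; apply.
    apply/eqP/setP=> x; rewrite !inE; case xJ: (x \in J).
      by rewrite orbT andbT; case/andP: (hJ x xJ).
    by rewrite orbF; case: (x \in S).
rewrite /pmon (big_setID S) setUK (eqP HJ).
by rewrite mulrCA.
Qed.

Lemma qS_nindep {R : realFieldType} {n : nat} {e : rel 'I_n} (p : 'I_n -> R)
  {S : {set 'I_n}} : ~~ indep e S -> qS e p S = 0.
Proof.
move=> nS; rewrite /qS big1 // => I /andP[iI sSI].
by rewrite (indep_sub sSI iI) in nS.
Qed.

Lemma pmon_gt0 {R : realFieldType} {n : nat} {e : rel 'I_n} {p : 'I_n -> R}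
  (S : {set 'I_n}) : shearer e p -> 0 < pmon p S.
Proof.
move=> [hp _]; apply: prodr_gt0 => i _; by case/andP: (hp i).
Qed.

Lemma qS_ge0 {R : realFieldType} {n : nat} {e : rel 'I_n} {p : 'I_n -> R}
  (S : {set 'I_n}) : simple_graph e -> shearer e p -> 0 <= qS e p S.
Proof.
move=> sg sh; case: (boolP (indep e S)) => iS.
  rewrite (qS_indep p sg iS); apply: mulr_ge0; first exact: ltW (pmon_gt0 S sh).
  by case: sh => _ hq; exact: ltW.
by rewrite (qS_nindep p iS).
Qed.

Lemma tS_anti {n : nat} (e : rel 'I_n) (S1 S2 : {set 'I_n}) :
  S1 \subset S2 -> tS e S2 \subset tS e S1.
Proof.
move=> sub; apply/subsetP=> x; rewrite !inE => /andP[xS f]; apply/andP; split.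
  by apply: contra xS; exact: (subsetP sub).
apply/forallP=> s; apply/implyP=> sS; move/forallP: f => /(_ s)/implyP; apply.
exact: (subsetP sub s sS).
Qed.

Lemma tS_I {n : nat} (e : rel 'I_n) (A B : {set 'I_n}) :
  tS e A :&: tS e B \subset tS e (A :|: B).
Proof.
apply/subsetP=> x; rewrite !inE => /andP[/andP[xA fA] /andP[xB fB]].
rewrite negb_or xA xB /=; apply/forallP=> s; apply/implyP; rewrite inE => /orP[sA|sB].
  by move/forallP: fA => /(_ s)/implyP; apply.
by move/forallP: fB => /(_ s)/implyP; apply.
Qed.

Lemma pmon_UI {R : realFieldType} {n : nat} (p : 'I_n -> R) (A B : {set 'I_n}) :
  pmon p (A :|: B) * pmon p (A :&: B) = pmon p A * pmon p B.
Proof.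
rewrite /pmon (big_setID (A := A :|: B) A) (big_setID (A := B) A) setUK.
have -> : (A :|: B) :\: A = B :\: A.
  by apply/setP=> x; rewrite !inE; case: (x \in A).
rewrite setIC /=; rewrite -mulrA; congr (_ * _); exact: mulrC.
Qed.

Theorem mainTheorem11 (R : realFieldType) (n : nat) (e : rel 'I_n)
    (p : 'I_n -> R) :
  simple_graph e -> shearer e p ->
  forall A B : {set 'I_n},
    qS e p (A :|: B) * qS e p (A :&: B) <= qS e p A * qS e p B.
Proof.
move=> sg sh A B; case: (sh) => hp hq.
case: (boolP (indep e (A :|: B))) => iU; last first.
  rewrite (qS_nindep p iU) mul0r; apply: mulr_ge0; exact: qS_ge0.
have iA := indep_sub (subsetUl A B) iU.
have iB := indep_sub (subsetUr A B) iU.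
have iI := indep_sub (subset_trans (subsetIl A B) (subsetUl A B)) iU.
rewrite (qS_indep p sg iU) (qS_indep p sg iA) (qS_indep p sg iB) (qS_indep p sg iI).
rewrite mulrACA pmon_UI [pmon p A * _ * _]mulrACA.
apply: ler_wpM2l; first by apply: ltW; apply: mulr_gt0; apply: pmon_gt0.
have m1 := qb_mono sg sh (tS_I e A B).
have m2 : qbreve e p (tS e (A :&: B)) <= qbreve e p (tS e A :|: tS e B).
  apply: qb_mono sg sh _; rewrite subUset; apply/andP; split; apply: tS_anti; [exact: subsetIl | exact: subsetIr].
have L := logsub2 sg sh (tS e A) (tS e B).
apply: le_trans L; rewrite [qbreve e p (_ :|: _) * _]mulrC.
by apply: ler_pM => //; apply: ltW.
Qed.
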